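(* Let $s\in W_p$ be a reflection in a wall of $\overline{C}$, $\lambda\in C\cap X(T)$, $\mu\in\overline{C}\cap X(T)$ with $\mathrm{Stab}_{W_p}(\mu)=\{1,s\}$, and let $w\in W^{I,\lambda}$. Then $ws\cdot\lambda\in C_I\cap X(T)$ if and only if $wsw^{-1}\notin W_{I,p}$.
   Context: $G$ connected reductive over algebraically closed field of characteristic $p>0$ satisfying Jantzen's standard assumptions, $p\ge h$ (Coxeter number). $T$ a maximal torus, $X(T)$ its character group, $\Phi\supseteq\Phi^+\supseteq\Phi_s$ roots, positive roots and simple roots, $\rho$ the half-sum of positive roots, $\alpha^\vee$ coroots. $W_p$ is the affine Weyl group, generated by the reflections $s_{\alpha,mp}=t_{mp\alpha}s_\alpha$ ($\alpha\in\Phi$, $m\in\mathbb{Z}$, $t_\gamma$ translation by $\gamma$), acting on $X(T)\otimes\mathbb{R}$ by the dot action $w\cdot\nu=w(\nu+\rho)-\rho$; stabilisers are for the dot action. Fix $I\subseteq\Phi_s$; $W_{I,p}\subseteq W_p$ is generated by $s_\alpha$ and translations by $mp\alpha$ for $\alpha\in I$, $m\in\mathbb{Z}$. $C=\{x:0<\langle x+\rho,\alpha^\vee\rangle<p\ \forall\alpha\in\Phi^+\}$ (fundamental alcove), $\overline{C}$ the same with non-strict inequalities; $C_I=\{x:0<\langle x+\rho,\alpha^\vee\rangle<p\ \forall\alpha\in\Phi^+\cap\mathbb{Z}I\}$, $\overline{C}_I$ with non-strict inequalities. $W^{I,\lambda}=\{w\in W_p: w\cdot\lambda\in\overline{C}_I\}$.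 *)

(* Defs.v *)
(* Combinatorial model of the root datum of (G,T) and of the
   affine Weyl group W_p acting (by affine maps) on X(T) (x) Q = 'rV[rat]_n. *)
From HB Require Import structures.
From mathcomp Require Import all_boot all_order all_algebra.
Set Implicit Arguments. Unset Strict Implicit. Unset Printing Implicit Defensive.
Import Order.TTheory GRing.Theory Num.Theory.
Local Open Scope ring_scope.

(* X(T) = 'rV[int]_n, Y(T) = 'rV[int]_n, perfect pairing = dot product. *)
Record rootData (n : nat) := RootData {
  Phi  : seq 'rV[int]_n;
  Phip : seq 'rV[int]_n;
  Phis : seq 'rV[int]_n;
  cor  : 'rV[int]_n -> 'rV[int]_n
}.

Definition ipair n (x y : 'rV[int]_n) : int := \sum_(i < n) x 0 i * y 0 i.

Definition in_Zspan n (S : seq 'rV[int]_n) (v : 'rV[int]_n) : Prop :=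
  exists c : 'I_(size S) -> int, v = \sum_(i < size S) c i *: S`_i.

Definition reduced_root_datum n (R : rootData n) : Prop :=
  [/\ uniq (Phi R),
      {in Phi R &, injective (cor R)},
      {in Phi R, forall a, ipair a (cor R a) = 2},
      {in Phi R &, forall a b, b - ipair b (cor R a) *: a \in Phi R} &
      {in Phi R &, forall a b,
          cor R b - ipair a (cor R b) *: cor R a \in map (cor R) (Phi R)}]
  /\
  {in Phi R &, forall a b, forall c : rat,
      map_mx (fun z : int => z%:~R) b = c *: map_mx (fun z : int => z%:~R) a ->
      c = 1 \/ c = -1}.

Definition is_base n (R : rootData n) : Prop :=
  [/\ uniq (Phip R), uniq (Phis R),
      forall a, (a \in Phi R) = (a \in Phip R) || (- a \in Phip R),
      {subset Phis R <= Phip R} &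
      (forall c : 'I_(size (Phis R)) -> int,
          \sum_(i < size (Phis R)) c i *: (Phis R)`_i = 0 -> forall i, c i = 0)]
  /\ {in Phip R, forall a, exists c : 'I_(size (Phis R)) -> nat,
          a = \sum_(i < size (Phis R)) (Phis R)`_i *+ c i}.

Definition based_reduced_root_datum n (R : rootData n) : Prop :=
  reduced_root_datum R /\ is_base R.

(* Jantzen's assumption: derived group simply connected, i.e. the coroot
   lattice Z Phi^vee is saturated in Y(T). *)
Definition derived_simply_connected n (R : rootData n) : Prop :=
  forall (y : 'rV[int]_n) (k : int), k != 0 ->
    in_Zspan (map (cor R) (Phi R)) (k *: y) -> in_Zspan (map (cor R) (Phi R)) y.

(* Coxeter number h = 1 + max_{alpha in Phi^+} <rho, alpha^vee> *)
Definition coxeter_number n (R : rootData n) : nat :=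
  (\max_(a <- Phip R) (absz (ipair (\sum_(b <- Phip R) b) (cor R a)) %/ 2)).+1.

Definition cvI n (v : 'rV[int]_n) : 'rV[rat]_n := map_mx (fun z : int => z%:~R) v.

Definition qpair n (R : rootData n) (x : 'rV[rat]_n) (a : 'rV[int]_n) : rat :=
  \sum_(i < n) x 0 i * (cor R a 0 i)%:~R.

Definition rho n (R : rootData n) : 'rV[rat]_n := 2^-1 *: \sum_(a <- Phip R) cvI a.

Definition in_X n (x : 'rV[rat]_n) : Prop := exists v : 'rV[int]_n, x = cvI v.

Definition aff n := ('M[rat]_n * 'rV[rat]_n)%type.
Definition act n (w : aff n) (x : 'rV[rat]_n) : 'rV[rat]_n := x *m w.1 + w.2.
Definition aff1 n : aff n := (1%:M, 0).
(* act (affc w1 w2) = act w1 \o act w2 *)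
Definition affc n (w1 w2 : aff n) : aff n := (w2.1 *m w1.1, w2.2 *m w1.1 + w1.2).
Definition affinv n (w : aff n) : aff n := (invmx w.1, - (w.2 *m invmx w.1)).

(* s_{alpha, m p} = t_{m p alpha} s_alpha *)
Definition refl n (R : rootData n) (p : nat) (a : 'rV[int]_n) (m : int) : aff n :=
  (1%:M - (cvI (cor R a))^T *m cvI a, (m * p%:Z)%:~R *: cvI a).
Definition transl n (g : 'rV[rat]_n) : aff n := (1%:M, g).

Definition dot n (R : rootData n) (w : aff n) (x : 'rV[rat]_n) : 'rV[rat]_n :=
  act w (x + rho R) - rho R.

Definition generated n (S : aff n -> Prop) (w : aff n) : Prop :=
  exists ws : seq (aff n), (forall g, g \in ws -> S g \/ S (affinv g)) /\
                           w = foldr (@affc n) (aff1 n) ws.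

Definition Wp n (R : rootData n) (p : nat) : aff n -> Prop :=
  generated (fun g => exists2 a, a \in Phi R & exists m : int, g = refl R p a m).

Definition WIp n (R : rootData n) (p : nat) (I : seq 'rV[int]_n) : aff n -> Prop :=
  generated (fun g => (exists2 a, a \in I & g = refl R p a 0) \/
                      (exists2 a, a \in I & exists m : int,
                          g = transl ((m * p%:Z)%:~R *: cvI a))).

Definition in_C n (R : rootData n) (p : nat) (x : 'rV[rat]_n) : Prop :=
  forall a, a \in Phip R -> 0 < qpair R (x + rho R) a < p%:R.
Definition in_Cbar n (R : rootData n) (p : nat) (x : 'rV[rat]_n) : Prop :=
  forall a, a \in Phip R -> 0 <= qpair R (x + rho R) a <= p%:R.
Definition in_CI n (R : rootData n) (p : nat) (I : seq 'rV[int]_n) (x : 'rV[rat]_n) : Prop :=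
  forall a, a \in Phip R -> in_Zspan I a -> 0 < qpair R (x + rho R) a < p%:R.
Definition in_CIbar n (R : rootData n) (p : nat) (I : seq 'rV[int]_n) (x : 'rV[rat]_n) : Prop :=
  forall a, a \in Phip R -> in_Zspan I a -> 0 <= qpair R (x + rho R) a <= p%:R.

Definition W_I_lam n (R : rootData n) (p : nat) (I : seq 'rV[int]_n) (lam : 'rV[rat]_n)
  (w : aff n) : Prop := Wp R p w /\ in_CIbar R p I (dot R w lam).

(* s is the (dot-action) reflection in a wall of Cbar: s = s_{alpha,mp}, and
   its fixed hyperplane {x | <x+rho,alpha^vee> = mp} meets Cbar in a point
   lying on no other reflection hyperplane of W_p (a codim-1 facet). *)
Definition wall_reflection n (R : rootData n) (p : nat) (s : aff n) : Prop :=
  exists2 a, a \in Phi R & exists m : int, s = refl R p a m /\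
    exists x : 'rV[rat]_n, [/\ in_Cbar R p x,
      qpair R (x + rho R) a = (m * p%:Z)%:~R &
      forall b (m' : int), b \in Phi R -> qpair R (x + rho R) b = (m' * p%:Z)%:~R ->
        (b = a /\ m' = m) \/ (b = - a /\ m' = - m)].

(* Main.v *)
Require Import Defs.
From HB Require Import structures.
From mathcomp Require Import all_boot all_order all_algebra.
From mathcomp Require Import zify ring lra.
Set Implicit Arguments. Unset Strict Implicit. Unset Printing Implicit Defensive.
Import Order.TTheory GRing.Theory Num.Theory.
Local Open Scope ring_scope.

Lemma ipairDl n (x y z : 'rV[int]_n) : ipair (x + y) z = ipair x z + ipair y z.
Proof. by rewrite /ipair -big_split; apply: eq_bigr => i _; rewrite !mxE mulrDl. Qed.
Lemma ipairDr n (x y z : 'rV[int]_n) : ipair z (x + y) = ipair z x + ipair z y.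
Proof. by rewrite /ipair -big_split; apply: eq_bigr => i _; rewrite !mxE mulrDr. Qed.
Lemma ipairZl n k (x z : 'rV[int]_n) : ipair (k *: x) z = k * ipair x z.
Proof. by rewrite /ipair mulr_sumr; apply: eq_bigr => i _; rewrite !mxE mulrA. Qed.
Lemma ipairZr n k (x z : 'rV[int]_n) : ipair z (k *: x) = k * ipair z x.
Proof. by rewrite /ipair mulr_sumr; apply: eq_bigr => i _; rewrite !mxE mulrCA. Qed.
Lemma ipairNl n (x z : 'rV[int]_n) : ipair (- x) z = - ipair x z.
Proof. by rewrite -scaleN1r ipairZl mulN1r. Qed.
Lemma ipairNr n (x z : 'rV[int]_n) : ipair z (- x) = - ipair z x.
Proof. by rewrite -scaleN1r ipairZr mulN1r. Qed.
Lemma ipairBl n (x y z : 'rV[int]_n) : ipair (x - y) z = ipair x z - ipair y z.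
Proof. by rewrite ipairDl ipairNl. Qed.
Lemma ipairBr n (x y z : 'rV[int]_n) : ipair z (x - y) = ipair z x - ipair z y.
Proof. by rewrite ipairDr ipairNr. Qed.
Lemma ipair0l n (z : 'rV[int]_n) : ipair 0 z = 0.
Proof. by rewrite -(scale0r 0) ipairZl mul0r. Qed.
Lemma ipair0r n (z : 'rV[int]_n) : ipair z 0 = 0.
Proof. by rewrite -(scale0r 0) ipairZr mul0r. Qed.
Definition ipairE := (ipairDl, ipairDr, ipairBl, ipairBr, ipairZl, ipairZr, ipairNl, ipairNr, ipair0l, ipair0r).

Lemma pigeon n (P : seq 'rV[int]_n) (u : 'rV[int]_n -> 'rV[int]_n) (x d : 'rV[int]_n) :
  {in P, forall y, u y \in P} ->
  (forall j : nat, x + j%:Z *: d \in P -> u (x + j%:Z *: d) = x + (j.+1)%:Z *: d) ->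
  x \in P -> d = 0.
Proof.
move=> uP uj xP.
have allj : forall j : nat, x + j%:Z *: d \in P.
  elim=> [|j IH]; first by rewrite scale0r addr0.
  by rewrite -uj // uP.
apply/eqP; apply: contraT => nz.
have U : uniq (map (fun j : nat => x + j%:Z *: d) (iota 0 (size P).+1)).
  rewrite map_inj_uniq ?iota_uniq // => i j /addrI /eqP.
  rewrite -subr_eq0 -scalerBl scalemx_eq0 (negbTE nz) orbF subr_eq0.
  by move/eqP => [].
have sub : {subset map (fun j : nat => x + j%:Z *: d) (iota 0 (size P).+1) <= P}.
  by move=> y /mapP [j _ ->].
by move: (uniq_leq_size U sub); rewrite size_map size_iota ltnn.
Qed.
Definition sr n (R : rootData n) (a x : 'rV[int]_n) := x - ipair x (cor R a) *: a.

Lemma sr_lin n (R : rootData n) a (x y : 'rV[int]_n) k :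
  sr R a (x - k *: y) = sr R a x - k *: sr R a y.
Proof.
rewrite /sr !ipairE scalerBr scalerA scalerBl; apply/rowP => i; rewrite !mxE; ring.
Qed.

Lemma srK n (R : rootData n) a x : ipair a (cor R a) = 2 -> sr R a (sr R a x) = x.
Proof.
move=> h2; rewrite /sr !ipairE h2; apply/rowP => i; rewrite !mxE; ring.
Qed.

Lemma srP n (R : rootData n) (HR : based_reduced_root_datum R) a x :
  a \in Phi R -> x \in Phi R -> sr R a x \in Phi R.
Proof. by case: HR => [[[_ _ _ rC _] _] _] aP xP; apply: rC. Qed.

Lemma compat n (R : rootData n) (HR : based_reduced_root_datum R) a b :
  a \in Phi R -> b \in Phi R ->
  cor R (sr R a b) = cor R b - ipair a (cor R b) *: cor R a.
Proof.
case: (HR) => [[[uniqP cI c2 rC cC] red] base] aP bP.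
set al := sr R a b.
have alP : al \in Phi R by exact: (srP HR).
have /mapP [de deP gE] := cC a b aP bP.
set g := cor R b - _ in gE *.
set f := cor R al.
have ha := c2 a aP; have hb := c2 b bP.
have h_alg : ipair al g = 2.
  rewrite /al /g /sr !ipairE ha hb; ring.
have h_alf : ipair al f = 2 by apply: (c2).
have h_deg : ipair de g = 2 by rewrite gE; apply: (c2).
have al0 : al != 0 by apply/eqP => e; move: h_alf; rewrite e ipair0l.
have conj3 : forall y, y - ipair y g *: al = sr R a (sr R b (sr R a y)).
  move=> y; rewrite {2}/sr sr_lin srK // -/al; congr (_ - _ *: _).
  by rewrite /sr /g !ipairE; ring.
have conjP : forall y, y \in Phi R -> y - ipair y g *: al \in Phi R.
  move=> y yP; rewrite conj3.
  by apply: (srP HR aP); apply: (srP HR bP); apply: (srP HR aP).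
have fP : forall y, y \in Phi R -> y - ipair y f *: al \in Phi R.
  by move=> y yP; apply: (srP HR alP).
have gP : forall y, y \in Phi R -> y - ipair y g *: de \in Phi R.
  by move=> y yP; rewrite gE; apply: (srP HR deP).
have fE : f = cor R al by [].
clearbody al g f; clear conj3.
have step1 : forall x, x \in Phi R -> ipair x f = ipair x g.
  move=> x xP.
  set hx := ipair x g - ipair x f.
  pose u := fun y => (y - ipair y g *: al) - ipair (y - ipair y g *: al) f *: al.
  have uP : {in Phi R, forall y, u y \in Phi R}.
    by move=> y yP; rewrite /u; apply: fP; apply: conjP.
  have := @pigeon n (Phi R) u x (hx *: al) uP.
  have H : forall j : nat, x + j%:Z *: (hx *: al) \in Phi R ->
        u (x + j%:Z *: (hx *: al)) = x + j.+1%:Z *: (hx *: al).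
    move=> j _; rewrite /u !ipairE h_alg h_alf /hx.
    apply/rowP => i; rewrite !mxE intS; ring.
  move=> /(_ H xP) /eqP; rewrite scalemx_eq0 (negbTE al0) orbF subr_eq0 => /eqP.
  by move=> ->.
have hdef : ipair de f = 2 by rewrite step1 // h_deg.
pose v := fun y => (y - ipair y g *: de) - ipair (y - ipair y g *: de) f *: al.
have vP : {in Phi R, forall y, v y \in Phi R}.
  by move=> y yP; rewrite /v; apply: fP; apply: gP.
have := @pigeon n (Phi R) v al (2 *: (al - de)) vP.
have H : forall j : nat, al + j%:Z *: (2 *: (al - de)) \in Phi R ->
      v (al + j%:Z *: (2 *: (al - de))) = al + j.+1%:Z *: (2 *: (al - de)).
  move=> j yP; rewrite /v.
  move: yP; set y := al + _ => yP.
  have hyf := step1 y yP.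
  have hyg : ipair y g = 2 by rewrite /y !ipairE h_alg h_deg; ring.
  have yE : y = al + j%:Z *: (2 *: (al - de)) by [].
  clearbody y.
  rewrite !ipairE hyf hyg hdef.
  rewrite yE; apply/rowP => i; rewrite !mxE intS; ring.
move=> /(_ H alP) /eqP; rewrite scalemx_eq0 /= subr_eq0 => /eqP e.
by rewrite fE e -gE.
Qed.

Lemma two_c n (R : rootData n) (HR : based_reduced_root_datum R) a :
  a \in Phi R -> ipair a (cor R a) = 2.
Proof. by case: HR => [[[_ _ c2 _ _] _] _]; apply: c2. Qed.

Lemma srr n (R : rootData n) (HR : based_reduced_root_datum R) a :
  a \in Phi R -> sr R a a = - a.
Proof.
move=> aP; rewrite /sr (two_c HR aP); apply/rowP => i; rewrite !mxE; ring.
Qed.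

Lemma negP_Phi n (R : rootData n) (HR : based_reduced_root_datum R) a :
  a \in Phi R -> - a \in Phi R.
Proof. by move=> aP; rewrite -(srr HR aP); apply: (srP HR). Qed.

Lemma cneg n (R : rootData n) (HR : based_reduced_root_datum R) a :
  a \in Phi R -> cor R (- a) = - cor R a.
Proof.
move=> aP; rewrite -(srr HR aP) (compat HR aP aP) (two_c HR aP).
by apply/rowP => i; rewrite !mxE; ring.
Qed.

Lemma cor_inj n (R : rootData n) (HR : based_reduced_root_datum R) a b :
  a \in Phi R -> b \in Phi R -> cor R a = cor R b -> a = b.
Proof. by case: HR => [[[_ cI _ _ _] _] _] aP bP; apply: cI. Qed.

Lemma a_neq0 n (R : rootData n) (HR : based_reduced_root_datum R) a :
  a \in Phi R -> a != 0.
Proof. by move=> aP; apply/eqP => e; move: (two_c HR aP); rewrite e ipair0l. Qed.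

Definition qp n (x : 'rV[rat]_n) (v : 'rV[int]_n) : rat := \sum_(i < n) x 0 i * (v 0 i)%:~R.

Lemma qpairE n (R : rootData n) x a : qpair R x a = qp x (cor R a).
Proof. by []. Qed.

Lemma qpDl n (x y : 'rV[rat]_n) v : qp (x + y) v = qp x v + qp y v.
Proof. by rewrite /qp -big_split; apply: eq_bigr => i _; rewrite !mxE mulrDl. Qed.
Lemma qpZl n k (x : 'rV[rat]_n) v : qp (k *: x) v = k * qp x v.
Proof. by rewrite /qp mulr_sumr; apply: eq_bigr => i _; rewrite !mxE mulrA. Qed.
Lemma qpNl n (x : 'rV[rat]_n) v : qp (- x) v = - qp x v.
Proof. by rewrite -scaleN1r qpZl mulN1r. Qed.
Lemma qpBl n (x y : 'rV[rat]_n) v : qp (x - y) v = qp x v - qp y v.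
Proof. by rewrite qpDl qpNl. Qed.
Lemma qp0l n (v : 'rV[int]_n) : qp 0 v = 0.
Proof. by rewrite -(scale0r 0) qpZl mul0r. Qed.
Lemma qpDr n (x : 'rV[rat]_n) v w : qp x (v + w) = qp x v + qp x w.
Proof. by rewrite /qp -big_split; apply: eq_bigr => i _; rewrite !mxE intrD mulrDr. Qed.
Lemma qpZr n (x : 'rV[rat]_n) (k : int) v : qp x (k *: v) = k%:~R * qp x v.
Proof. by rewrite /qp mulr_sumr; apply: eq_bigr => i _; rewrite !mxE intrM mulrCA. Qed.
Lemma qpNr n (x : 'rV[rat]_n) v : qp x (- v) = - qp x v.
Proof. by rewrite -scaleN1r qpZr mulN1r. Qed.
Lemma qpBr n (x : 'rV[rat]_n) v w : qp x (v - w) = qp x v - qp x w.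
Proof. by rewrite qpDr qpNr. Qed.
Lemma qp_cvI n (u v : 'rV[int]_n) : qp (cvI u) v = (ipair u v)%:~R.
Proof. by rewrite /qp /ipair rmorph_sum; apply: eq_bigr => i _ /=; rewrite !mxE -intrM. Qed.
Definition qpE := (qpDl, qpBl, qpZl, qpNl, qp0l, qpDr, qpBr, qpZr, qpNr, qp_cvI).

Lemma cvID n (u v : 'rV[int]_n) : cvI (u + v) = cvI u + cvI v.
Proof. by apply/rowP => i; rewrite !mxE intrD. Qed.
Lemma cvIZ n k (u : 'rV[int]_n) : cvI (k *: u) = k%:~R *: cvI u.
Proof. by apply/rowP => i; rewrite !mxE intrM. Qed.
Lemma cvIN n (u : 'rV[int]_n) : cvI (- u) = - cvI u.
Proof. by rewrite -scaleN1r cvIZ scaleN1r. Qed.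
Lemma cvIB n (u v : 'rV[int]_n) : cvI (u - v) = cvI u - cvI v.
Proof. by rewrite cvID cvIN. Qed.
Lemma cvI0 n : cvI (0 : 'rV[int]_n) = 0.
Proof. by apply/rowP => i; rewrite !mxE. Qed.
Lemma cvI_inj n (u v : 'rV[int]_n) : cvI u = cvI v -> u = v.
Proof. by move/rowP => e; apply/rowP => i; move: (e i); rewrite !mxE => /intr_inj. Qed.
Definition cvIE := (cvID, cvIB, cvIZ, cvIN, cvI0).

Lemma qp_delta n (i : 'I_n) v : qp (delta_mx 0 i) v = (v 0 i)%:~R.
Proof.
rewrite /qp (bigD1 i) //= big1 ?addr0; first by rewrite mxE !eqxx mul1r.
by move=> j ji; rewrite mxE eqxx /= (negbTE ji) mul0r.
Qed.

Lemma qp_ext n (v w : 'rV[int]_n) : (forall x, qp x v = qp x w) -> v = w.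
Proof.
move=> h; apply/rowP => i; move: (h (delta_mx 0 i)); rewrite !qp_delta.
by move/intr_inj.
Qed.

Lemma rowcol n (y : 'rV[rat]_n) (v : 'rV[int]_n) (z : 'rV[rat]_n) :
  y *m (cvI v)^T *m z = qp y v *: z.
Proof.
rewrite [y *m _]mx11_scalar mul_scalar_mx; congr (_ *: _).
by rewrite /qp mxE; apply: eq_bigr => i _; rewrite !mxE.
Qed.

Lemma act_refl n (R : rootData n) p a m y :
  act (refl R p a m) y = y - (qp y (cor R a) - (m * p%:Z)%:~R) *: cvI a.
Proof.
rewrite /act /refl /= mulmxBr mulmx1 mulmxA rowcol.
by rewrite scalerBl opprB addrA addrAC.
Qed.

Lemma act_affc n (w1 w2 : aff n) y : act (affc w1 w2) y = act w1 (act w2 y).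
Proof. by rewrite /act /affc /= mulmxDl mulmxA addrA. Qed.

Lemma act_aff1 n y : act (aff1 n) y = y.
Proof. by rewrite /act /aff1 /= mulmx1 addr0. Qed.

Lemma act_transl n (g y : 'rV[rat]_n) : act (transl g) y = y + g.
Proof. by rewrite /act /transl /= mulmx1. Qed.

Lemma act_inv n (w : aff n) y : w.1 \in unitmx -> act w (act (affinv w) y) = y.
Proof.
by move=> u; rewrite /act /affinv /= mulmxDl mulNmx !mulmxKV // subrK.
Qed.

Lemma act_invK n (w : aff n) y : w.1 \in unitmx -> act (affinv w) (act w y) = y.
Proof.
by move=> u; rewrite /act /affinv /= mulmxDl !mulmxK // addrK.
Qed.

Lemma aff_ext n (u v : aff n) : (forall y, act u y = act v y) -> u = v.
Proof.
case: u v => [A a] [B b] /= h.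
have ab : a = b by move: (h 0); rewrite /act /= !mul0mx !add0r.
subst b; congr (_, _).
apply/row_matrixP => i; move: (h (delta_mx 0 i)); rewrite /act /= => /addIr.
by rewrite !rowE.
Qed.

Lemma affcA n (u v w : aff n) : affc u (affc v w) = affc (affc u v) w.
Proof. by apply: aff_ext => y; rewrite !act_affc. Qed.

Lemma affc1 n (u : aff n) : affc (aff1 n) u = u.
Proof. by apply: aff_ext => y; rewrite !act_affc act_aff1. Qed.

Lemma rowcol1 n (a c : 'rV[int]_n) : cvI a *m (cvI c)^T = ((ipair a c)%:~R : rat)%:M.
Proof.
rewrite [LHS]mx11_scalar -qp_cvI /qp mxE; congr (_%:M).
by apply: eq_bigr => i _; rewrite !mxE.
Qed.

Lemma reflmxK n (R : rootData n) p a m : ipair a (cor R a) = 2 ->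
  (refl R p a m).1 *m (refl R p a m).1 = 1%:M.
Proof.
move=> h2; rewrite /refl /= mulmxBl mul1mx mulmxBr mulmx1.
rewrite mulmxA -(mulmxA _ (cvI a)) rowcol1 h2 mul_mx_scalar -scalemxAl.
set X := _ *m cvI a.
apply/matrixP => i j; rewrite !mxE; ring.
Qed.

Lemma refl_unit n (R : rootData n) p a m : ipair a (cor R a) = 2 ->
  (refl R p a m).1 \in unitmx.
Proof. by move=> h2; case: (mulmx1_unit (reflmxK p m h2)). Qed.

Lemma affinv_refl n (R : rootData n) p a m : ipair a (cor R a) = 2 ->
  affinv (refl R p a m) = refl R p a m.
Proof.
move=> h2; apply: aff_ext => y.
rewrite -{1}[y](act_inv y (refl_unit p m h2)) act_invK ?refl_unit //.
apply/esym; rewrite -{1}[y](act_inv y (refl_unit p m h2)).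
set z := act (affinv _) y.
rewrite !act_refl !qpE h2.
apply/rowP => i; rewrite !mxE; ring.
Qed.

Lemma refl_invol n (R : rootData n) p a m y : ipair a (cor R a) = 2 ->
  act (refl R p a m) (act (refl R p a m) y) = y.
Proof.
move=> h2; rewrite -{1}(affinv_refl p m h2) act_invK //; exact: refl_unit.
Qed.

Lemma affinvK n (g : aff n) : g.1 \in unitmx -> affinv (affinv g) = g.
Proof.
move=> u; apply: aff_ext => y.
have uh : (affinv g).1 \in unitmx by rewrite /affinv /= unitmx_inv.
rewrite -{1}[y](act_invK y u).
by rewrite act_invK.
Qed.

Lemma unit_of_inv n (g : aff n) : (affinv g).1 \in unitmx -> g.1 \in unitmx.
Proof. by rewrite /affinv /= unitmx_inv. Qed.

Lemma affc1r n (u : aff n) : affc u (aff1 n) = u.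
Proof. by apply: aff_ext => y; rewrite act_affc act_aff1. Qed.

Lemma foldr_affc_cat n (s1 s2 : seq (aff n)) :
  foldr (@affc n) (aff1 n) (s1 ++ s2) =
  affc (foldr (@affc n) (aff1 n) s1) (foldr (@affc n) (aff1 n) s2).
Proof.
elim: s1 => [|g s1 IH] /=; first by rewrite affc1.
by rewrite IH affcA.
Qed.

Definition isRefl n (R : rootData n) p (g : aff n) :=
  exists2 a, a \in Phi R & exists m : int, g = refl R p a m.

Lemma Wp_list n (R : rootData n) (HR : based_reduced_root_datum R) p w : Wp R p w ->
  exists ws, (forall g, g \in ws -> isRefl R p g) /\ w = foldr (@affc n) (aff1 n) ws.
Proof.
case=> ws [Hws ->]; exists ws; split => // g /Hws [] // [a aP [m e]].
have h2 := two_c HR aP.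
have ug : g.1 \in unitmx by apply: unit_of_inv; rewrite e; apply: refl_unit.
exists a => //; exists m.
by rewrite -(affinvK ug) e affinv_refl.
Qed.

Lemma Wp_ind n (R : rootData n) (HR : based_reduced_root_datum R) p (P : aff n -> Prop) :
  P (aff1 n) ->
  (forall a m u, a \in Phi R -> Wp R p u -> P u -> P (affc (refl R p a m) u)) ->
  forall w, Wp R p w -> P w.
Proof.
move=> P1 PS w /(Wp_list HR) [ws [Hws ->]].
elim: ws Hws => [|g ws IH] Hws //=.
have [a aP [m ->]] := Hws g (mem_head _ _).
apply: PS => //.
  exists ws; split => //.
  move=> h hin; left; apply: Hws; by rewrite inE hin orbT.
apply: IH => h hin; apply: Hws; by rewrite inE hin orbT.
Qed.

Lemma Wp_unit n (R : rootData n) (HR : based_reduced_root_datum R) p w :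
  Wp R p w -> w.1 \in unitmx.
Proof.
move: w; apply: (Wp_ind HR); first by rewrite /aff1 /= unitmx1.
move=> a m u aP _ uu; rewrite /affc /= unitmx_mul uu /=.
exact: (refl_unit p m (two_c HR aP)).
Qed.

Lemma HP n (R : rootData n) (HR : based_reduced_root_datum R) p w :
  Wp R p w -> forall b, b \in Phi R -> exists2 b', b' \in Phi R &
    exists j : int, forall y, qp (act w y) (cor R b) = qp y (cor R b') + (j * p%:Z)%:~R.
Proof.
move: w; apply: (Wp_ind HR).
  by move=> b bP; exists b => //; exists 0 => y; rewrite act_aff1 mul0r addr0.
move=> a m u aP _ IH b bP.
have sP : sr R a b \in Phi R by apply: (srP HR).
have [b' b'P [j hj]] := IH _ sP.
exists b' => //; exists (j + m * ipair a (cor R b)) => y.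
have := hj y; rewrite act_affc act_refl; move: (act u y) => z e.
rewrite (compat HR aP bP) !qpE in e; rewrite !qpE.
have eA : qp z (cor R b) = qp y (cor R b') + (j * p%:Z)%:~R + (ipair a (cor R b))%:~R * qp z (cor R a).
  by rewrite -e; ring.
rewrite eA ?intrM ?intrD ?intrM; ring.
Qed.

Lemma RF n (R : rootData n) (HR : based_reduced_root_datum R) p c l b k y :
  c \in Phi R -> b \in Phi R ->
  act (refl R p c l) (act (refl R p b k) (act (refl R p c l) y)) =
  act (refl R p (sr R c b) (k - l * ipair c (cor R b))) y.
Proof.
move=> cP bP; rewrite !act_refl (compat HR cP bP) /sr !qpE !cvIE (two_c HR cP).
apply/rowP => i; rewrite !mxE ?intrD ?intrM ?intrN ?intrD ?intrM; ring.
Qed.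

Lemma act_inv_affc n (g u : aff n) y : g.1 \in unitmx -> u.1 \in unitmx ->
  act (affinv (affc g u)) y = act (affinv u) (act (affinv g) y).
Proof.
move=> ug uu.
have uw : (affc g u).1 \in unitmx by rewrite /affc /= unitmx_mul uu ug.
rewrite -{2}[y](act_inv y uw) act_affc act_invK // act_invK //.
Qed.

Lemma CJ n (R : rootData n) (HR : based_reduced_root_datum R) p w a m :
  Wp R p w -> a \in Phi R -> exists2 be, be \in Phi R & exists k : int,
    forall y, act w (act (refl R p a m) (act (affinv w) y)) = act (refl R p be k) y.
Proof.
move=> Hw aP; move: w Hw; apply: (Wp_ind HR).
  exists a => //; exists m => y.
  have u1 : (aff1 n).1 \in unitmx by rewrite /aff1 /= unitmx1.
  rewrite act_aff1; congr act.
  by rewrite -{2}[y](act_inv y u1) act_aff1.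
move=> c l u cP Hu [be beP [k hk]].
have h2 := two_c HR cP.
exists (sr R c be); first exact: (srP HR).
exists (k - l * ipair c (cor R be)) => y.
rewrite act_inv_affc ?refl_unit ?(Wp_unit HR Hu) // affinv_refl //.
by rewrite act_affc hk RF.
Qed.

Lemma inv_sum_even (T : eqType) (tau : T -> T) (f : T -> int) (s : seq T) :
  uniq s -> {in s, forall x, tau x \in s} -> {in s, forall x, tau (tau x) = x} ->
  {in s, forall x, (2 %| f (tau x) + f x)%Z} ->
  {in s, forall x, tau x = x -> (2 %| f x)%Z} ->
  (2 %| \sum_(x <- s) f x)%Z.
Proof.
move: {2}(size s) (leqnn (size s)) => N; elim: N s => [|N IH] s.
  by rewrite leqn0 => /nilP -> _ _ _ _ _; rewrite big_nil rpred0.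
case: s => [|x r] szs; first by rewrite big_nil rpred0.
move=> U cl inv hf hfix.
move: U; rewrite cons_uniq => /andP [xr Ur].
rewrite big_cons.
have xin : x \in x :: r by rewrite mem_head.
have rin : forall y, y \in r -> y \in x :: r by move=> y yr; rewrite inE yr orbT.
have [tx | ntx] := eqVneq (tau x) x.
  rewrite rpredD //; first exact: hfix.
  apply: IH => //.
  - move=> y yr; have := cl y (rin y yr); rewrite inE => /orP [/eqP e|//].
    have yx : y = x by rewrite -(inv y (rin y yr)) e tx.
    by move: xr; rewrite -yx yr.
  - by move=> y yr; apply: inv; apply: rin.
  - by move=> y yr; apply: hf; apply: rin.
  - by move=> y yr; apply: hfix; apply: rin.
have txr : tau x \in r.
  by have := cl x xin; rewrite inE (negbTE ntx).
rewrite (big_rem _ txr) /= addrA.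
rewrite rpredD //; first by rewrite addrC; apply: hf.
have Ur' : uniq (rem (tau x) r) by apply: rem_uniq.
have memr : forall y, y \in rem (tau x) r -> (y != tau x) && (y \in r).
  by move=> y; rewrite mem_rem_uniq.
apply: IH => //.
- by move: szs; rewrite size_rem //=; lia.
- move=> y /memr /andP [ytx yr]; rewrite mem_rem_uniq //; apply/andP; split.
    apply/eqP => e; have yx : y = x by rewrite -(inv y (rin y yr)) e (inv x xin).
    by move: xr; rewrite -yx yr.
  have := cl y (rin y yr); rewrite inE => /orP [/eqP e|//].
  by move: ytx; rewrite -e (inv y (rin y yr)) eqxx.
- by move=> y /memr /andP [_ yr]; apply: inv; apply: rin.
- by move=> y /memr /andP [_ yr]; apply: hf; apply: rin.
- by move=> y /memr /andP [_ yr]; apply: hfix; apply: rin.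
Qed.

Lemma natscale n (c : nat) (v : 'rV[int]_n) : (c%:Z) *: v = v *+ c.
Proof. by rewrite -natz scaler_nat. Qed.

Lemma Phi_split n (R : rootData n) (HR : based_reduced_root_datum R) a :
  a \in Phi R -> (a \in Phip R) || (- a \in Phip R).
Proof. by case: HR => _ [[_ _ PhiE _ _] _]; rewrite PhiE. Qed.

Lemma pos_Phi n (R : rootData n) (HR : based_reduced_root_datum R) a :
  a \in Phip R -> a \in Phi R.
Proof. by case: HR => _ [[_ _ PhiE _ _] _] aP; rewrite PhiE aP. Qed.

Lemma sim_pos n (R : rootData n) (HR : based_reduced_root_datum R) a :
  a \in Phis R -> a \in Phip R.
Proof. by case: HR => _ [[_ _ _ sub _] _]; apply: sub. Qed.

Lemma lin_indep n (R : rootData n) (HR : based_reduced_root_datum R)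
  (c : 'I_(size (Phis R)) -> int) :
  \sum_(i < size (Phis R)) c i *: (Phis R)`_i = 0 -> forall i, c i = 0.
Proof. by case: HR => _ [[_ _ _ _ li] _]; apply: li. Qed.

Lemma pos_coef n (R : rootData n) (HR : based_reduced_root_datum R) a :
  a \in Phip R -> exists c : 'I_(size (Phis R)) -> nat,
    a = \sum_(i < size (Phis R)) (c i)%:Z *: (Phis R)`_i.
Proof.
case: HR => _ [_ pos] /pos [c ->]; exists c.
by apply: eq_bigr => i _; rewrite natscale.
Qed.

Lemma notboth n (R : rootData n) (HR : based_reduced_root_datum R) a :
  a \in Phip R -> - a \in Phip R -> False.
Proof.
move=> aP naP.
have [c ec] := pos_coef HR aP; have [d ed] := pos_coef HR naP.
have h : \sum_(i < size (Phis R)) ((c i)%:Z + (d i)%:Z) *: (Phis R)`_i = 0.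
  under eq_bigr do rewrite scalerDl.
  by rewrite big_split /= -ec -ed subrr.
have c0 : forall i, c i = 0%N.
  move=> i; have := lin_indep HR h i; lia.
have : a = 0 by rewrite ec big1 // => i _; rewrite c0 scale0r.
by apply/eqP; apply: (a_neq0 HR); apply: (pos_Phi HR).
Qed.

Lemma qp_sum n (s : seq 'rV[int]_n) v :
  qp (\sum_(b <- s) cvI b) v = (\sum_(b <- s) ipair b v)%:~R.
Proof.
elim: s => [|b s IH]; first by rewrite !big_nil qp0l.
by rewrite !big_cons qpDl IH qp_cvI intrD.
Qed.

Lemma rho_even n (R : rootData n) (HR : based_reduced_root_datum R) a :
  a \in Phi R -> (2 %| \sum_(b <- Phip R) ipair b (cor R a))%Z.
Proof.
move=> aP.
have h2 := two_c HR aP.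
pose tau := fun b => if sr R a b \in Phip R then sr R a b else - sr R a b.
have tauP : {in Phip R, forall b, tau b \in Phip R}.
  move=> b bP; rewrite /tau; case: ifP => // hn.
  have := Phi_split HR (srP HR aP (pos_Phi HR bP)); by rewrite hn.
have srN : forall b, sr R a (- b) = - sr R a b.
  by move=> b; rewrite /sr !ipairE scaleNr opprD opprK.
apply: (@inv_sum_even _ tau).
- by case: HR => _ [[] ].
- exact: tauP.
- move=> b bP; rewrite {2}/tau; case: ifP => hb.
    by rewrite /tau srK // bP.
  rewrite /tau srN srK //; case: ifP => nb; last by rewrite opprK.
  by case: (notboth HR bP nb).
- move=> b bP; rewrite /tau; case: ifP => _; rewrite /sr !ipairE h2.
    by apply/dvdzP; exists 0; ring.
  by apply/dvdzP; exists (ipair b (cor R a)); ring.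
- move=> b bP; rewrite /tau; case: ifP => _ e.
    move: e => /eqP; rewrite /sr subr_eq addrC -subr_eq subrr eq_sym scalemx_eq0.
    rewrite (negbTE (a_neq0 HR aP)) orbF => /eqP ->; exact: rpred0.
  have e2 : 2%:~R *: cvI b = (ipair b (cor R a))%:~R *: cvI a.
    move: e; rewrite /sr => /(congr1 (fun v => cvI v)); rewrite !cvIE => e.
    apply/rowP => i; move/rowP: e => /(_ i); rewrite !mxE => e.
    lra.
  have e3 : cvI b = ((ipair b (cor R a))%:~R / 2) *: cvI a.
    rewrite mulrC -scalerA -e2 scalerA mulVf ?scale1r //.
  case: (HR) => [[_ red] _].
  have := red a b aP (pos_Phi HR bP) _ e3.
  case=> e4; apply/dvdzP.
    by exists 1; apply: (@intr_inj rat); rewrite intrM; lra.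
  by exists (-1); apply: (@intr_inj rat); rewrite intrM; lra.
Qed.

Lemma rho_int n (R : rootData n) (HR : based_reduced_root_datum R) a :
  a \in Phi R -> exists z : int, qp (rho R) (cor R a) = z%:~R.
Proof.
move=> aP; have /dvdzP [z hz] := rho_even HR aP.
exists z; rewrite /rho qpZl qp_sum hz intrM.
by rewrite mulrC -mulrA mulfV ?mulr1.
Qed.

Lemma act_X n (R : rootData n) (HR : based_reduced_root_datum R) p w :
  Wp R p w -> forall v, exists v', act w (cvI v + rho R) = cvI v' + rho R.
Proof.
move: w; apply: (Wp_ind HR); first by move=> v; exists v; rewrite act_aff1.
move=> a m u aP _ IH v.
have [v1 e1] := IH v.
have [z hz] := rho_int HR aP.
exists (v1 - (ipair v1 (cor R a) + z - m * p%:Z) *: a).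
rewrite act_affc e1 act_refl qpDl hz !qpE !cvIE.
apply/rowP => i; rewrite !mxE ?intrD ?intrB ?intrM; ring.
Qed.

Lemma dot_X n (R : rootData n) (HR : based_reduced_root_datum R) p w v :
  Wp R p w -> in_X (dot R w (cvI v)).
Proof.
move=> Hw; have [v' e] := act_X HR Hw v.
by exists v'; rewrite /dot e addrK.
Qed.

Lemma Zspan0 n (S : seq 'rV[int]_n) : in_Zspan S 0.
Proof. by exists (fun _ => 0); rewrite big1 // => i _; rewrite scale0r. Qed.

Lemma ZspanD n (S : seq 'rV[int]_n) u v : in_Zspan S u -> in_Zspan S v -> in_Zspan S (u + v).
Proof.
move=> [c ->] [d ->]; exists (fun i => c i + d i).
by rewrite -big_split; apply: eq_bigr => i _; rewrite scalerDl.
Qed.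

Lemma ZspanZ n (S : seq 'rV[int]_n) k u : in_Zspan S u -> in_Zspan S (k *: u).
Proof.
move=> [c ->]; exists (fun i => k * c i).
by rewrite scaler_sumr; apply: eq_bigr => i _; rewrite scalerA.
Qed.

Lemma ZspanN n (S : seq 'rV[int]_n) u : in_Zspan S u -> in_Zspan S (- u).
Proof. by move=> h; rewrite -scaleN1r; apply: ZspanZ. Qed.

Lemma ZspanB n (S : seq 'rV[int]_n) u v : in_Zspan S u -> in_Zspan S v -> in_Zspan S (u - v).
Proof. by move=> hu hv; apply: ZspanD => //; apply: ZspanN. Qed.

Lemma Zspan_mem n (S : seq 'rV[int]_n) a : a \in S -> in_Zspan S a.
Proof.
move=> aS; have ij : (index a S < size S)%N by rewrite index_mem.
pose j := Ordinal ij.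
exists (fun i => ((i == j) : int)).
rewrite (bigD1 j) //= big1 ?addr0; first by rewrite eqxx scale1r nth_index.
by move=> i /negbTE ->; rewrite scale0r.
Qed.

Lemma Zspan_sum n (S : seq 'rV[int]_n) k (F : 'I_k -> 'rV[int]_n) :
  (forall i, in_Zspan S (F i)) -> in_Zspan S (\sum_(i < k) F i).
Proof.
move=> h; elim/big_ind: _ => //; [exact: Zspan0 | exact: ZspanD].
Qed.

Definition isGenI n (R : rootData n) p (I : seq 'rV[int]_n) (g : aff n) :=
  (exists2 a, a \in I & g = refl R p a 0) \/
  (exists2 a, a \in I & exists m : int, g = transl ((m * p%:Z)%:~R *: cvI a)).

Lemma WIp_list n (R : rootData n) (HR : based_reduced_root_datum R) p I
  (HI : {subset I <= Phis R}) w : WIp R p I w ->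
  exists ws, (forall g, g \in ws -> isGenI R p I g) /\ w = foldr (@affc n) (aff1 n) ws.
Proof.
case=> ws [Hws ->]; exists ws; split => // g /Hws [] // [[a aI e]|[a aI [m e]]].
- have h2 : ipair a (cor R a) = 2.
    by apply: (two_c HR); apply: (pos_Phi HR); apply: (sim_pos HR); apply: HI.
  have ug : g.1 \in unitmx by apply: unit_of_inv; rewrite e; apply: refl_unit.
  by left; exists a => //; rewrite -(affinvK ug) e affinv_refl.
- have ug : g.1 \in unitmx by apply: unit_of_inv; rewrite e /transl /= unitmx1.
  right; exists a => //; exists (- m).
  rewrite -(affinvK ug) e; apply: aff_ext => y.
  rewrite act_transl /act /affinv /transl /= invmx1 !mulmx1.
  by rewrite mulNr intrN scaleNr.
Qed.

Lemma WIp_comp n (R : rootData n) p I u v : WIp R p I u -> WIp R p I v -> WIp R p I (affc u v).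
Proof.
move=> [s1 [H1 ->]] [s2 [H2 ->]]; exists (s1 ++ s2); split; last by rewrite foldr_affc_cat.
by move=> g; rewrite mem_cat => /orP [/H1|/H2].
Qed.

Lemma WIp_gen n (R : rootData n) p I g : isGenI R p I g -> WIp R p I g.
Proof.
move=> h; exists [:: g]; split; last by rewrite /= affc1r.
by move=> h'; rewrite inE => /eqP ->; left.
Qed.

Lemma WIp_disp n (R : rootData n) (HR : based_reduced_root_datum R) p I
  (HI : {subset I <= Phis R}) w : WIp R p I w ->
  forall u, exists u', act w (cvI u) = cvI u' /\ in_Zspan I (u' - u).
Proof.
move=> /(WIp_list HR HI) [ws [Hws ->]].
elim: ws Hws => [|g ws IH] Hws u /=.
  by exists u; rewrite act_aff1 subrr; split => //; apply: Zspan0.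
have [|u1 [e1 z1]] := IH _ u.
  by move=> h hin; apply: Hws; rewrite inE hin orbT.
have := Hws g (mem_head _ _); case=> [[a aI ->]|[a aI [m ->]]].
- exists (u1 - ipair u1 (cor R a) *: a); rewrite act_affc e1 act_refl qp_cvI.
  split; first by rewrite !cvIE mul0r subr0.
  have -> : u1 - ipair u1 (cor R a) *: a - u = (u1 - u) - ipair u1 (cor R a) *: a.
    by rewrite addrAC.
  by apply: ZspanB => //; apply: ZspanZ; apply: Zspan_mem.
- exists (u1 + (m * p%:Z) *: a); rewrite act_affc e1 act_transl.
  split; first by rewrite !cvIE.
  rewrite addrAC; apply: ZspanD => //; by apply: ZspanZ; apply: Zspan_mem.
Qed.

Lemma coord_uniq n (R : rootData n) (HR : based_reduced_root_datum R)
  (d e : 'I_(size (Phis R)) -> int) :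
  \sum_(i < size (Phis R)) d i *: (Phis R)`_i = \sum_(i < size (Phis R)) e i *: (Phis R)`_i -> forall i, d i = e i.
Proof.
move=> h i; apply/eqP; rewrite -subr_eq0; apply/eqP.
apply: (lin_indep HR (c := fun i => d i - e i)).
under eq_bigr do rewrite scalerBl.
by rewrite sumrB h subrr.
Qed.

Lemma ZtoS n (R : rootData n) (I : seq 'rV[int]_n) (HI : {subset I <= Phis R}) v :
  in_Zspan I v -> exists d : 'I_(size (Phis R)) -> int,
    v = \sum_(i < size (Phis R)) d i *: (Phis R)`_i /\ forall i : 'I_(size (Phis R)), (Phis R)`_i \notin I -> d i = 0.
Proof.
move=> [z ->].
have idxP : forall j : 'I_(size I), (index (nth (0 : 'rV[int]_n)%R I j) (Phis R) < size (Phis R))%N.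
  by move=> j; rewrite index_mem; apply: HI; apply: mem_nth.
pose idx := fun j => Ordinal (idxP j).
exists (fun i => \sum_(j < size I | idx j == i) z j); split.
  under [RHS]eq_bigr do rewrite scaler_suml.
  rewrite (exchange_big_dep xpredT) //=.
  apply: eq_bigr => j _.
  rewrite (big_pred1 (idx j)) /=; last by move=> i; rewrite eq_sym.
  by rewrite nth_index //; apply: HI; apply: mem_nth.
move=> i iI; rewrite big1 // => j /eqP e.
move: iI; rewrite -e /= nth_index ?mem_nth //.
by apply: HI; apply: mem_nth.
Qed.

Lemma StoZ n (R : rootData n) (I : seq 'rV[int]_n) (d : 'I_(size (Phis R)) -> int) :
  (forall i : 'I_(size (Phis R)), (Phis R)`_i \notin I -> d i = 0) ->
  in_Zspan I (\sum_(i < size (Phis R)) d i *: (Phis R)`_i).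
Proof.
move=> h; apply: Zspan_sum => i.
case: (boolP ((Phis R)`_i \in I)) => iI.
  by apply: ZspanZ; apply: Zspan_mem.
by rewrite h // scale0r; apply: Zspan0.
Qed.

Lemma Zspan_pos n (R : rootData n) (HR : based_reduced_root_datum R)
  (I : seq 'rV[int]_n) (HI : {subset I <= Phis R}) b (k : int) :
  b \in Phi R -> k != 0 -> in_Zspan I (k *: b) ->
  exists2 b', b' \in Phip R & in_Zspan I b' /\ (b' = b \/ b' = - b).
Proof.
move=> bP k0 hz.
have [b' bpos b'E] : exists2 b', b' \in Phip R & b' = b \/ b' = - b.
  by move: (Phi_split HR bP) => /orP [h|h]; [exists b => //; left | exists (- b) => //; right].
exists b' => //; split => //.
have [c ec] := pos_coef HR bpos.
have hz' : in_Zspan I (k *: b').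
  by case: b'E => ->; [|rewrite scalerN; apply: ZspanN].
have [d [ed d0]] := ZtoS HI hz'.
have e : forall i, k * (c i)%:Z = d i.
  apply: (coord_uniq HR); rewrite -ed ec scaler_sumr.
  by apply: eq_bigr => i _; rewrite scalerA.
rewrite ec; apply: StoZ => i iI.
have := e i; rewrite d0 // => /eqP; rewrite mulf_eq0 (negbTE k0) /= => /eqP.
by move=> ->.
Qed.

Definition Bf n (R : rootData n) (x y : 'rV[int]_n) : int :=
  \sum_(c <- Phi R) ipair x (cor R c) * ipair y (cor R c).

Lemma Bf_sym n (R : rootData n) x y : Bf R x y = Bf R y x.
Proof. by apply: eq_bigr => c _; rewrite mulrC. Qed.

Lemma BfDl n (R : rootData n) x y z : Bf R (x + y) z = Bf R x z + Bf R y z.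
Proof. by rewrite /Bf -big_split; apply: eq_bigr => c _; rewrite ipairDl mulrDl. Qed.

Lemma BfZl n (R : rootData n) k x z : Bf R (k *: x) z = k * Bf R x z.
Proof. by rewrite /Bf mulr_sumr; apply: eq_bigr => c _; rewrite ipairZl mulrA. Qed.

Lemma BfNl n (R : rootData n) x z : Bf R (- x) z = - Bf R x z.
Proof. by rewrite -scaleN1r BfZl mulN1r. Qed.

Lemma BfBl n (R : rootData n) x y z : Bf R (x - y) z = Bf R x z - Bf R y z.
Proof. by rewrite BfDl BfNl. Qed.

Lemma Bf_sumr n (R : rootData n) x k (d : 'I_k -> int) (v : 'I_k -> 'rV[int]_n) :
  Bf R x (\sum_(i < k) d i *: v i) = \sum_(i < k) d i * Bf R x (v i).
Proof.
rewrite Bf_sym; elim/big_rec2: _ => [|i y1 y2 _ <-].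
  by rewrite /Bf big1 // => c _; rewrite ipair0l mul0r.
by rewrite BfDl BfZl Bf_sym.
Qed.

Lemma ipair_sr n (R : rootData n) (HR : based_reduced_root_datum R) a c x :
  a \in Phi R -> c \in Phi R ->
  ipair (sr R a x) (cor R c) = ipair x (cor R (sr R a c)).
Proof.
move=> aP cP; rewrite (compat HR aP cP) /sr !ipairE; ring.
Qed.

Lemma sr_perm n (R : rootData n) (HR : based_reduced_root_datum R) a :
  a \in Phi R -> perm_eq (map (sr R a) (Phi R)) (Phi R).
Proof.
move=> aP; have h2 := two_c HR aP.
have U : uniq (Phi R) by case: HR => [[[]]].
have Um : uniq (map (sr R a) (Phi R)).
  by rewrite map_inj_uniq // => x y e; rewrite -(srK x h2) e srK.
have sub : {subset map (sr R a) (Phi R) <= Phi R}.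
  by move=> y /mapP [x xP ->]; apply: (srP HR).
have hs : (size (Phi R) <= size (map (sr R a) (Phi R)))%N by rewrite size_map.
have [_ eqi] := uniq_min_size Um sub hs.
exact: uniq_perm.
Qed.

Lemma Bf_inv n (R : rootData n) (HR : based_reduced_root_datum R) a x y :
  a \in Phi R -> Bf R (sr R a x) (sr R a y) = Bf R x y.
Proof.
move=> aP; rewrite /Bf.
rewrite (eq_big_seq (fun c => ipair x (cor R (sr R a c)) * ipair y (cor R (sr R a c)))).
  by rewrite -(big_map (sr R a) xpredT (fun c => ipair x (cor R c) * ipair y (cor R c)))
     (perm_big _ (sr_perm HR aP)).
by move=> c cP; rewrite (ipair_sr HR x aP cP) (ipair_sr HR y aP cP).
Qed.

Lemma BfNr n (R : rootData n) x z : Bf R x (- z) = - Bf R x z.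
Proof. by rewrite Bf_sym BfNl Bf_sym. Qed.

Lemma Bf_refl n (R : rootData n) (HR : based_reduced_root_datum R) a x :
  a \in Phi R -> 2 * Bf R x a = ipair x (cor R a) * Bf R a a.
Proof.
move=> aP; have := Bf_inv HR x a aP.
rewrite (srr HR aP) BfNr {1}/sr BfBl BfZl.
move: (ipair x (cor R a) * Bf R a a) => M e; lia.
Qed.

Lemma Bf_pos n (R : rootData n) (HR : based_reduced_root_datum R) a :
  a \in Phi R -> 0 < Bf R a a.
Proof.
move=> aP; rewrite /Bf (big_rem a aP) /= (two_c HR aP).
apply: (@lt_le_trans _ _ (2 * 2)) => //.
rewrite lerDl; apply: sumr_ge0 => c _; rewrite -expr2; exact: sqr_ge0.
Qed.

Lemma sum_pos_ex k (c : 'I_k -> nat) (x : 'I_k -> int) :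
  0 < \sum_(i < k) (c i)%:Z * x i -> exists i, (0 < c i)%N /\ 0 < x i.
Proof.
case: (pickP (fun i => (0 < c i)%N && (0 < x i))) => [i /andP [h1 h2] | h].
  by move=> _; exists i.
move=> hs; exfalso; move: hs; apply/negP; rewrite -leNgt.
apply: sumr_le0 => i _; move: (h i) => /negbT; rewrite negb_and.
case/orP => [c0 | x0].
  by move: c0; rewrite -leqNgt leqn0 => /eqP ->; rewrite mul0r.
by rewrite -leNgt in x0; apply: mulr_ge0_le0.
Qed.

Lemma Posz_sum k (e : 'I_k -> nat) : ((\sum_(i < k) e i)%N : int) = \sum_(i < k) (e i)%:Z.
Proof. exact: (big_morph Posz PoszD (erefl _)). Qed.

Lemma WI_refl_aux n (R : rootData n) (HR : based_reduced_root_datum R) p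
  (I : seq 'rV[int]_n) (HI : {subset I <= Phis R}) N :
  forall g (c : 'I_(size (Phis R)) -> nat), g \in Phip R -> in_Zspan I g ->
  g = \sum_(i < size (Phis R)) (c i)%:Z *: (Phis R)`_i ->
  (\sum_(i < size (Phis R)) c i <= N)%N -> WIp R p I (refl R p g 0).
Proof.
elim: N => [|N IH] g c gP gZ gE hN.
  have c0 : forall i, c i = 0%N.
    by move=> i; move: hN; rewrite (bigD1 i) //=; lia.
  exfalso; have : g = 0 by rewrite gE big1 // => i _; rewrite c0 scale0r.
  by apply/eqP; apply: (a_neq0 HR); apply: (pos_Phi HR).
case: (boolP (g \in I)) => gI.
  by apply: WIp_gen; left; exists g.
have gF := pos_Phi HR gP.
have [d [dE d0]] := ZtoS HI gZ.
have cd := coord_uniq HR (etrans (esym gE) dE).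
have cI : forall i, (0 < c i)%N -> (Phis R)`_i \in I.
  move=> i ci; apply/negPn/negP => iI; move: (cd i); rewrite d0 //; lia.
have Bp := Bf_pos HR gF.
rewrite {2}gE Bf_sumr in Bp.
have [i [ci Bi]] := sum_pos_ex Bp.
set al := (Phis R)`_i in Bi.
have alI : al \in I := cI i ci.
have alF : al \in Phi R.
  by apply: (pos_Phi HR); apply: (sim_pos HR); apply: mem_nth.
set k := ipair g (cor R al).
have kpos : 0 < k.
  have := Bf_refl HR g alF; have := Bf_pos HR alF; rewrite -/k.
  move: (Bf R al al) (Bf R g al) Bi => B A Bi hB e; nia.
have [j0 [j0i cj0]] : exists j, j != i /\ (0 < c j)%N.
  case: (pickP (fun j => (j != i) && (0 < c j)%N)) => [j /andP [h1 h2] | h].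
    by exists j.
  exfalso; move/negP: gI; apply.
  have gE' : g = (c i)%:Z *: al.
    rewrite gE (bigD1 i) //= big1 ?addr0 // => j ji.
    by move: (h j); rewrite ji /= => /negbT; rewrite -leqNgt leqn0 => /eqP ->; rewrite scale0r.
  case: (HR) => [[_ red] _].
  have ee : cvI g = (c i)%:~R *: cvI al by rewrite gE' cvIZ.
  have := red al g alF gF _ ee.
  case=> e; last first.
    have : (c i)%:Z = -1 by apply: (@intr_inj rat); rewrite e rmorphN rmorph1.
    lia.
  have e1 : (c i)%:Z = 1 by apply: (@intr_inj rat); rewrite e rmorph1.
  by rewrite gE' e1 scale1r.
set g' := sr R al g.
have g'F : g' \in Phi R by apply: (srP HR).
have g'E : g' = \sum_(j < size (Phis R)) ((c j)%:Z - k * (j == i)%:Z) *: (Phis R)`_j.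
  under eq_bigr do rewrite scalerBl.
  rewrite sumrB /g' /sr -/k {1}gE; congr (_ - _).
  rewrite (bigD1 i) //= big1 ?addr0; first by rewrite eqxx mulr1.
  by move=> j /negbTE ->; rewrite mulr0 scale0r.
have g'P : g' \in Phip R.
  move: (Phi_split HR g'F) => /orP [//|ng'].
  have [e eE] := pos_coef HR ng'.
  have : g' = \sum_(j < size (Phis R)) (- (e j)%:Z) *: (Phis R)`_j.
    by rewrite -[g']opprK eE -sumrN; apply: eq_bigr => j _; rewrite scaleNr.
  move=> h; have := coord_uniq HR (etrans (esym g'E) h) j0.
  by rewrite (negbTE j0i) mulr0 subr0; lia.
have [e eE] := pos_coef HR g'P.
have ce := coord_uniq HR (etrans (esym g'E) eE).
have g'Z : in_Zspan I g'.
  by rewrite /g' /sr; apply: ZspanB => //; apply: ZspanZ; apply: Zspan_mem.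
have hN' : (\sum_(j < size (Phis R)) e j <= N)%N.
  have : ((\sum_(j < size (Phis R)) e j)%N : int) = ((\sum_(j < size (Phis R)) c j)%N : int) - k.
    rewrite !Posz_sum; under eq_bigr do rewrite -ce.
    rewrite sumrB; congr (_ - _).
    rewrite (bigD1 i) //= big1 ?addr0; first by rewrite eqxx mulr1.
    by move=> j /negbTE ->; rewrite mulr0.
  move: hN; lia.
have W' := IH g' e g'P g'Z eE hN'.
have -> : refl R p g 0 = affc (refl R p al 0) (affc (refl R p g' 0) (refl R p al 0)).
  apply: aff_ext => y; rewrite !act_affc (RF HR _ _ _ _ alF g'F) mul0r subr0.
  by rewrite /g' srK // (two_c HR alF).
apply: WIp_comp; first by apply: WIp_gen; left; exists al.
by apply: WIp_comp => //; apply: WIp_gen; left; exists al.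
Qed.

Lemma WI_refl n (R : rootData n) (HR : based_reduced_root_datum R) p
  (I : seq 'rV[int]_n) (HI : {subset I <= Phis R}) g :
  g \in Phip R -> in_Zspan I g -> WIp R p I (refl R p g 0).
Proof.
move=> gP gZ; have [c cE] := pos_coef HR gP.
exact: (@WI_refl_aux n R HR p I HI _ g c gP gZ cE (leqnn _)).
Qed.

Lemma WIp_aff1 n (R : rootData n) p I : WIp R p I (aff1 n).
Proof. by exists [::]. Qed.

Lemma WIp_transl n (R : rootData n) p (I : seq 'rV[int]_n) v (k : int) :
  in_Zspan I v -> WIp R p I (transl ((k * p%:Z)%:~R *: cvI v)).
Proof.
move=> [z ->].
have -> : (k * p%:Z)%:~R *: cvI (\sum_(j < size I) z j *: I`_j) =
          \sum_(j < size I) ((k * z j) * p%:Z)%:~R *: cvI I`_j.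
  rewrite (big_morph (@cvI n) (@cvID n) (@cvI0 n)) scaler_sumr.
  apply: eq_bigr => j _; rewrite cvIZ scalerA -intrM; congr (_%:~R *: _); ring.
elim/big_ind: _.
- exact: WIp_aff1.
- move=> x y hx hy.
  have -> : transl (x + y) = affc (transl x) (transl y).
    by apply: aff_ext => u; rewrite act_affc !act_transl -addrA [y + x]addrC.
  exact: WIp_comp.
- move=> j _; apply: WIp_gen; right; exists I`_j; first by apply: mem_nth.
  by exists (k * z j).
Qed.

Lemma WI_reflk n (R : rootData n) (HR : based_reduced_root_datum R) p
  (I : seq 'rV[int]_n) (HI : {subset I <= Phis R}) g k :
  g \in Phip R -> in_Zspan I g -> WIp R p I (refl R p g k).
Proof.
move=> gP gZ.
have -> : refl R p g k = affc (transl ((k * p%:Z)%:~R *: cvI g)) (refl R p g 0).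
  apply: aff_ext => y; rewrite act_affc act_transl !act_refl mul0r subr0.
  by rewrite scalerBl opprB addrA addrAC.
apply: WIp_comp; first exact: WIp_transl.
exact: WI_refl.
Qed.

Definition inside (p : nat) (k : int) (u : rat) :=
  ((k * p%:Z)%:~R < u) && (u < ((k + 1) * p%:Z)%:~R).

Lemma inside_uniq p k k' u : (0 < p)%N -> inside p k u -> inside p k' u -> k = k'.
Proof.
move=> p0 /andP [h1 h2] /andP [h3 h4].
have a1 : k * p%:Z < (k' + 1) * p%:Z by rewrite -(ltr_int rat); apply: lt_trans h4.
have a2 : k' * p%:Z < (k + 1) * p%:Z by rewrite -(ltr_int rat); apply: lt_trans h2.
have pz : 0 < p%:Z by rewrite ltz_nat.
nia.
Qed.

Lemma inside_shift p k (M : int) u : inside p k u -> inside p (k + M) (u + (M * p%:Z)%:~R).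
Proof.
rewrite /inside => /andP [h1 h2]; apply/andP; split.
  by rewrite mulrDl intrD ltrD2r.
by rewrite -addrA (addrC M) addrA mulrDl [X in _ < X]intrD ltrD2r.
Qed.

Lemma qp_sr_act n (R : rootData n) (HR : based_reduced_root_datum R) p a m b y :
  a \in Phi R -> b \in Phi R ->
  qp (act (refl R p a m) y) (cor R b) =
  qp y (cor R (sr R a b)) + ((m * ipair a (cor R b)) * p%:Z)%:~R.
Proof.
move=> aP bP; rewrite act_refl !qpE (compat HR aP bP) !qpE !intrM; ring.
Qed.

Lemma C1 n (R : rootData n) (HR : based_reduced_root_datum R) p (p0 : (0 < p)%N)
  a (m : int) (X0 L : 'rV[rat]_n)
  (HX0 : forall b, b \in Phip R -> 0 <= qp X0 (cor R b) <= p%:R)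
  (HU : forall b (m' : int), b \in Phi R -> qp X0 (cor R b) = (m' * p%:Z)%:~R ->
          (b = a /\ m' = m) \/ (b = - a /\ m' = - m))
  (HL : forall b, b \in Phip R -> 0 < qp L (cor R b) < p%:R) b :
  b \in Phi R -> b <> a -> b <> - a ->
  exists k, inside p k (qp L (cor R b)) && inside p k (qp X0 (cor R b)).
Proof.
move=> bP ba bna.
have notm : forall m' : int, qp X0 (cor R b) <> (m' * p%:Z)%:~R.
  by move=> m' e; case: (HU b m' bP e) => [[]|[]].
have pE : ((p%:Z)%:~R : rat) = p%:R by [].
move: (Phi_split HR bP) => /orP [pb|nb].
  exists 0; rewrite /inside mul0r add0r mul1r /= pE.
  have /andP [h1 h2] := HL b pb; have /andP [h3 h4] := HX0 b pb.
  have ne0 : qp X0 (cor R b) != 0.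
    by apply/eqP => e; apply: (notm 0); rewrite mul0r e.
  have nep : qp X0 (cor R b) != p%:R.
    by apply/eqP => e; apply: (notm 1); rewrite mul1r e.
  have s3 : 0 < qp X0 (cor R b) by rewrite lt_def ne0 h3.
  have s4 : qp X0 (cor R b) < p%:R by rewrite lt_def eq_sym nep h4.
  by rewrite h1 h2 s3 s4.
have cb : cor R b = - cor R (- b).
  by rewrite -(cneg HR (negP_Phi HR bP)) opprK.
have e1 : ((((-1) * p%:Z)%:~R) : rat) = - p%:R by rewrite mulN1r intrN.
have e2 : (((((-1) + 1) * p%:Z)%:~R) : rat) = 0 by rewrite addNr mul0r.
exists (-1); rewrite /inside cb !qpNr e1 e2.
have /andP [h1 h2] := HL (- b) nb; have /andP [h3 h4] := HX0 (- b) nb.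
have ne0 : qp X0 (cor R (- b)) != 0.
  by apply/eqP => e; apply: (notm 0); rewrite cb qpNr mul0r e oppr0.
have nep : qp X0 (cor R (- b)) != p%:R.
  by apply/eqP => e; apply: (notm (-1)); rewrite cb qpNr mulN1r e intrN.
have s3 : 0 < qp X0 (cor R (- b)) by rewrite lt_def ne0 h3.
have s4 : qp X0 (cor R (- b)) < p%:R by rewrite lt_def eq_sym nep h4.
by apply/andP; split; apply/andP; split; lra.
Qed.

Lemma srN n (R : rootData n) a b : sr R a (- b) = - sr R a b.
Proof. by rewrite /sr !ipairE scaleNr opprD opprK. Qed.

Lemma C2 n (R : rootData n) (HR : based_reduced_root_datum R) p (p0 : (0 < p)%N)
  a (m : int) (X0 L : 'rV[rat]_n) (aP : a \in Phi R)
  (HX0 : forall b, b \in Phip R -> 0 <= qp X0 (cor R b) <= p%:R)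
  (HU : forall b (m' : int), b \in Phi R -> qp X0 (cor R b) = (m' * p%:Z)%:~R ->
          (b = a /\ m' = m) \/ (b = - a /\ m' = - m))
  (Ha : qp X0 (cor R a) = (m * p%:Z)%:~R)
  (HL : forall b, b \in Phip R -> 0 < qp L (cor R b) < p%:R) b :
  b \in Phi R -> b <> a -> b <> - a ->
  exists k, inside p k (qp L (cor R b)) && inside p k (qp (act (refl R p a m) L) (cor R b)).
Proof.
move=> bP ba bna.
have h2 := two_c HR aP.
set b' := sr R a b.
have b'P : b' \in Phi R by apply: (srP HR).
have b'a : b' <> a.
  by move=> e; apply: bna; rewrite -(srK b h2) -/b' e (srr HR aP).
have b'na : b' <> - a.
  by move=> e; apply: ba; rewrite -(srK b h2) -/b' e srN (srr HR aP) opprK.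
have [k /andP [k1 k2]] := C1 HR p0 HX0 HU HL bP ba bna.
have [k' /andP [k'1 k'2]] := C1 HR p0 HX0 HU HL b'P b'a b'na.
have sX0 : act (refl R p a m) X0 = X0 by rewrite act_refl Ha subrr scale0r subr0.
have e0 := qp_sr_act HR p m X0 aP bP; rewrite sX0 in e0.
have e1 := qp_sr_act HR p m L aP bP.
set M := m * ipair a (cor R b) in e0 e1.
have kk : k = k' + M.
  apply: (inside_uniq p0 k2); rewrite e0; exact: inside_shift.
exists k; rewrite k1 /= e1 kk; exact: inside_shift.
Qed.

Lemma gen_comp n (S : aff n -> Prop) u v : generated S u -> generated S v -> generated S (affc u v).
Proof.
move=> [s1 [H1 ->]] [s2 [H2 ->]]; exists (s1 ++ s2); split; last by rewrite foldr_affc_cat.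
by move=> g; rewrite mem_cat => /orP [/H1|/H2].
Qed.

Lemma Wp_refl n (R : rootData n) p a m : a \in Phi R -> Wp R p (refl R p a m).
Proof.
move=> aP; exists [:: refl R p a m]; split; last by rewrite /= affc1r.
by move=> g; rewrite inE => /eqP ->; left; exists a => //; exists m.
Qed.

Lemma fix_neg n (R : rootData n) (HR : based_reduced_root_datum R) a b :
  a \in Phi R -> b \in Phi R -> sr R a b = - b -> b = a \/ b = - a.
Proof.
move=> aP bP e.
have e2 : cvI b = ((ipair b (cor R a))%:~R / 2) *: cvI a.
  have e3 : 2%:~R *: cvI b = (ipair b (cor R a))%:~R *: cvI a.
    move: e; rewrite /sr => /(congr1 (fun v => cvI v)); rewrite !cvIE => e.
    apply/rowP => i; move/rowP: e => /(_ i); rewrite !mxE => e; lra.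
  by rewrite mulrC -scalerA -e3 scalerA mulVf ?scale1r.
case: (HR) => [[_ red] _].
have := red a b aP bP _ e2.
case=> e4; [left|right]; apply: cvI_inj; rewrite e2 e4 ?scale1r ?scaleN1r ?cvIN //.
Qed.

Lemma refl_neg n (R : rootData n) (HR : based_reduced_root_datum R) p a k :
  a \in Phi R -> refl R p (- a) k = refl R p a (- k).
Proof.
move=> aP; apply: aff_ext => y; rewrite !act_refl (cneg HR aP) !qpE !cvIE.
apply/rowP => i; rewrite !mxE !intrM !intrN; ring.
Qed.

Lemma int_between (z P : int) : 0 < P -> z * P < P -> 0 < (z + 1) * P -> z = 0.
Proof. move=> h1 h2 h3; nia. Qed.

Lemma no_int (k : int) p : (0 < p)%N ->
  (0 : rat) < (k * p%:Z)%:~R -> (k * p%:Z)%:~R < (p%:R : rat) -> False.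
Proof.
move=> p0 h1 h2.
rewrite ltr0z in h1.
have h2' : k * p%:Z < p%:Z by rewrite -(ltr_int rat).
have pz : 0 < p%:Z by rewrite ltz_nat.
have k0 : 0 < k by rewrite -(pmulr_lgt0 _ pz).
nia.
Qed.

Lemma key n (R : rootData n) (HR : based_reduced_root_datum R) p
  (I : seq 'rV[int]_n) (HI : {subset I <= Phis R}) w a m be k g (e j : int) :
  Wp R p w -> a \in Phi R -> be \in Phi R -> g \in Phip R -> in_Zspan I g ->
  (forall y, act w (act (refl R p a m) (act (affinv w) y)) = act (refl R p be k) y) ->
  (forall y, qp (act w y) (cor R g) = e%:~R * qp y (cor R a) + (j * p%:Z)%:~R) ->
  WIp R p I (refl R p be k).
Proof.
move=> Wpw aP beP gP gZ hk he.
have uw := Wp_unit HR Wpw.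
have gF := pos_Phi HR gP.
have H1 : forall x, qp (act (refl R p be k) x) (cor R g) =
    - qp x (cor R g) + ((2 * j + 2 * e * m) * p%:Z)%:~R.
  move=> x; rewrite -hk he.
  have xE : x = act w (act (affinv w) x) by rewrite act_inv.
  rewrite {2}xE he; move: (act (affinv w) x) => y.
  rewrite act_refl !qpE (two_c HR aP) !intrM !intrD !intrM; ring.
set r := ipair be (cor R g).
have H2 : forall x, qp (act (refl R p be k) x) (cor R g) =
    qp x (cor R g) - (qp x (cor R be) - (k * p%:Z)%:~R) * r%:~R.
  by move=> x; rewrite act_refl !qpE.
have cE : 2 *: cor R g = r *: cor R be.
  apply: qp_ext => x; rewrite !qpZr.
  have h1 := H1 x; have h2 := H2 x; have h3 := H1 0; have h4 := H2 0.
  rewrite !qp0l in h3 h4.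
  move: h1 h2 h3 h4; set A := qp (act _ x) _; set B := qp (act _ 0) _.
  move: (((2 * j + 2 * e * m) * p%:Z)%:~R) => C.
  move: ((k * p%:Z)%:~R) => K.
  move: (qp x (cor R g)) (qp x (cor R be)) (r%:~R : rat) => X Y Rr.
  move=> h1 h2 h3 h4.
  have eq1 : C = K * Rr by lra.
  have e5 : X - (Y - K) * Rr = - X + K * Rr by rewrite -h2 h1 eq1.
  rewrite mulrBl in e5.
  rewrite -[(2%:~R : rat)]/(2%:R : rat) [Rr * Y]mulrC.
  lra.
have sP : sr R be g \in Phi R by apply: (srP HR).
have : sr R be g = - g.
  apply: (cor_inj HR sP (negP_Phi HR gF)).
  rewrite (compat HR beP gF) (cneg HR gF) -/r -cE.
  by apply/rowP => i; rewrite !mxE; ring.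
move/(fix_neg HR beP gF) => [ge|ge].
  by rewrite -ge; exact: (@WI_reflk n R HR p I HI g k gP gZ).
have -> : be = - g by rewrite ge opprK.
by rewrite (refl_neg HR p k gF); exact: (@WI_reflk n R HR p I HI g (- k) gP gZ).
Qed.

Theorem proposition4p13 (n : nat) (R : rootData n)
  (HR : based_reduced_root_datum R) (Hsc : derived_simply_connected R)
  (p : nat) (Hp : prime p) (Hh : (coxeter_number R <= p)%N)
  (I : seq 'rV[int]_n) (HI : {subset I <= Phis R})
  (s : aff n) (Hs : wall_reflection R p s)
  (lam mu : 'rV[int]_n) (Hlam : in_C R p (cvI lam)) (Hmu : in_Cbar R p (cvI mu))
  (Hstab : forall v, Wp R p v -> (dot R v (cvI mu) = cvI mu <-> v = aff1 n \/ v = s))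
  (w : aff n) (Hw : W_I_lam R p I (cvI lam) w) :
  (in_CI R p I (dot R (affc w s) (cvI lam)) /\ in_X (dot R (affc w s) (cvI lam)))
  <-> ~ WIp R p I (affc w (affc s (affinv w))).
Proof.
have p0 : (0 < p)%N := prime_gt0 Hp.
have pz : 0 < p%:Z by rewrite ltz_nat.
case: Hs => a aP [m [sE [x0 [HX0c Ha HU]]]]; subst s.
have dotE : forall u, dot R u (cvI lam) + rho R = act u (cvI lam + rho R).
  by move=> u; rewrite /dot subrK.
case: Hw => WpW HwI.
have HY : forall b, b \in Phip R -> in_Zspan I b ->
    0 <= qp (act w (cvI lam + rho R)) (cor R b) <= p%:R.
  by move=> b bP bZ; have := HwI b bP bZ; rewrite qpairE dotE.
have inX : in_X (dot R (affc w (refl R p a m)) (cvI lam)).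
  by apply: (dot_X HR (p := p)); apply: gen_comp => //; exact: (Wp_refl p m aP).
suff : (forall g, g \in Phip R -> in_Zspan I g ->
          0 < qp (act w (act (refl R p a m) (cvI lam + rho R))) (cor R g) < p%:R)
       <-> ~ WIp R p I (affc w (affc (refl R p a m) (affinv w))).
  move=> [h1 h2]; split.
    case=> ci _; apply: h1 => g gP gZ; have := ci g gP gZ.
    by rewrite qpairE dotE act_affc.
  move=> nW; split => //; move=> g gP gZ; have := h2 nW g gP gZ.
  by rewrite qpairE dotE act_affc.
have HX0 : forall b, b \in Phip R -> 0 <= qp (x0 + rho R) (cor R b) <= p%:R := HX0c.
have HU' : forall b (m' : int), b \in Phi R -> qp (x0 + rho R) (cor R b) = (m' * p%:Z)%:~R ->
    (b = a /\ m' = m) \/ (b = - a /\ m' = - m) := HU.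
have Ha' : qp (x0 + rho R) (cor R a) = (m * p%:Z)%:~R := Ha.
have HL : forall b, b \in Phip R -> 0 < qp (cvI lam + rho R) (cor R b) < p%:R := Hlam.
move: HX0 HU' Ha' HL HY; move: (x0 + rho R) (cvI lam + rho R) => X0 L HX0 HU' Ha' HL HY.
have uw := Wp_unit HR WpW.
have [be beP [k hk]] := CJ HR m WpW aP.
have tE : affc w (affc (refl R p a m) (affinv w)) = refl R p be k.
  by apply: aff_ext => y; rewrite !act_affc hk.
rewrite tE.
have tY : act (refl R p be k) (act w L) = act w (act (refl R p a m) L).
  by rewrite -hk act_invK.
have h2be := two_c HR beP.
split.
- move=> HCI HWI.
  have [K [K0 KZ]] : exists K : int, K != 0 /\ in_Zspan I (K *: be).
    case: (eqVneq k 0) => [k0|k0].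
      have [u' [e1 z1]] := WIp_disp HR HI HWI be.
      exists (-2); split => //.
      have : u' = - be.
        apply: cvI_inj; rewrite -e1 act_refl k0 mul0r subr0 qp_cvI h2be cvIN.
        by apply/rowP => i; rewrite !mxE; ring.
      move=> ue; move: z1; rewrite ue.
      have -> : - be - be = (-2) *: be by apply/rowP => i; rewrite !mxE; ring.
      by [].
    have [u' [e1 z1]] := WIp_disp HR HI HWI 0.
    exists (k * p%:Z); split.
      by rewrite mulf_neq0 // gt_eqF.
    have : u' = (k * p%:Z) *: be.
      apply: cvI_inj; rewrite -e1 act_refl cvI0 qp0l cvIZ.
      by rewrite !sub0r scaleNr opprK.
    by move=> ue; move: z1; rewrite ue subr0.
  have [b' b'P [b'Z b'E]] := Zspan_pos HR HI beP K0 KZ.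
  have hy := HY b' b'P b'Z; have hz := HCI b' b'P b'Z.
  rewrite -tY act_refl in hz.
  move: hy hz; move: (act w L) => Y hy hz; rewrite !qpE in hz.
  have two : ((2 : int)%:~R : rat) = 2 by [].
  case: b'E => b'E; subst b'.
    rewrite h2be two in hz.
    move: hy hz; move: (qp Y (cor R be)) => u.
    move=> /andP [y1 y2] /andP [z1 z2].
    by apply: (no_int (k := k) p0); lra.
  rewrite (cneg HR beP) !qpNr ipairNr h2be intrN two in hy hz.
  move: hy hz; move: (qp Y (cor R be)) => u.
  move=> /andP [y1 y2] /andP [z1 z2].
  by apply: (no_int (k := - k) p0); rewrite mulNr intrN; lra.
- move=> HnW g gP gZ.
  have [b bP [j hj]] := HP HR WpW (pos_Phi HR gP).
  have hy := HY g gP gZ; rewrite hj in hy.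
  case: (eqVneq b a) => [ba|ba].
    exfalso; apply: HnW; apply: (key HR HI (e := 1) (j := j) WpW aP beP gP gZ hk).
    by move=> y; rewrite hj ba mul1r.
  case: (eqVneq b (- a)) => [bna|bna].
    exfalso; apply: HnW; apply: (key HR HI (e := -1) (j := j) WpW aP beP gP gZ hk).
    by move=> y; rewrite hj bna (cneg HR aP) qpNr mulN1r.
  have [kk /andP [k1 k2]] := C2 HR p0 aP HX0 HU' Ha' HL bP (elimN eqP ba) (elimN eqP bna).
  have i1 := inside_shift j k1; have i2 := inside_shift j k2.
  have kj : kk + j = 0.
    move: i1 hy => /andP [a1 a2] /andP [b1 b2].
    have c1 : (kk + j) * p%:Z < p%:Z.
      by rewrite -(ltr_int rat); apply: lt_le_trans b2.
    have c2 : 0 < (kk + j + 1) * p%:Z.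
      by rewrite -(ltr0z rat); apply: le_lt_trans a2.
    exact: (int_between pz c1 c2).
  rewrite hj; move: i2; rewrite /inside kj mul0r add0r mul1r.
  by [].
Qed.
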